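(* Let $\mathbb{L}$ be a complete orthomodular lattice and let $f:\mathcal{D}(\mathbb{L})\to\mathbb{R}$ be an abstract observable function. Then there is a unique spectral family $E:\mathbb{R}\to\mathbb{L}$ such that $f(\mathcal{J})=\inf\{\lambda\in\mathbb{R} : E_\lambda\in\mathcal{J}\}$ for all $\mathcal{J}\in\mathcal{D}(\mathbb{L})$.
   Context: A complete orthomodular lattice is a complete lattice $\mathbb{L}$ with zero $0$ and unit $1$ and an orthocomplementation $a\mapsto a^\perp$ (involutive, order-reversing, $a\wedge a^\perp=0$, $a\vee a^\perp=1$) such that $a\le b$ implies $b=a\vee(b\wedge a^\perp)$. A dual ideal of $\mathbb{L}$ is a nonempty $\mathcal{J}\subseteq\mathbb{L}$ with $0\notin\mathcal{J}$, $a,b\in\mathcal{J}\Rightarrow a\wedge b\in\mathcal{J}$, and $a\in\mathcal{J},a\le b\Rightarrow b\in\mathcal{J}$; $\mathcal{D}(\mathbb{L})$ is the set of dual ideals, topologized by the basis $\mathcal{D}_a(\mathbb{L}):=\{\mathcal{J}: a\in\mathcal{J}\}$. An abstract observable function is $f:\mathcal{D}(\mathbb{L})\to\mathbb{R}$ that is upper semicontinuous (for all $\mathcal{J}_0$, $\varepsilon>0$ there is $a\in\mathcal{J}_0$ with $f(\mathcal{J})<f(\mathcal{J}_0)+\varepsilon$ for all $\mathcal{J}\in\mathcal{D}_a(\mathbb{L})$) and satisfies $f(\bigcap_{j}\mathcal{J}_j)=\sup_j f(\mathcal{J}_j)$ for every nonempty family of dual ideals. A spectral family in $\mathbb{L}$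 is a map $E:\mathbb{R}\to\mathbb{L}$ with $E_\lambda\le E_\mu$ for $\lambda\le\mu$, $E_\lambda=\bigwedge_{\mu>\lambda}E_\mu$ for all $\lambda$, $\bigwedge_\lambda E_\lambda=0$ and $\bigvee_\lambda E_\lambda=1$. *)

(* Defs.v *)
From Stdlib Require Import Reals.
Open Scope R_scope.

Record COML := {
  car :> Type;
  le : car -> car -> Prop;
  le_refl : forall a, le a a;
  le_trans : forall a b c, le a b -> le b c -> le a c;
  le_antisym : forall a b, le a b -> le b a -> a = b;
  sup : (car -> Prop) -> car;
  sup_ub : forall (S : car -> Prop) a, S a -> le a (sup S);
  sup_least : forall (S : car -> Prop) b, (forall a, S a -> le a b) -> le (sup S) b;
  inf : (car -> Prop) -> car;
  inf_lb : forall (S : car -> Prop) a, S a -> le (inf S) a;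
  inf_greatest : forall (S : car -> Prop) b, (forall a, S a -> le b a) -> le b (inf S);
  orth : car -> car;
  orth_invol : forall a, orth (orth a) = a;
  orth_antitone : forall a b, le a b -> le (orth b) (orth a);
  orth_meet : forall a, inf (fun x => x = a \/ x = orth a) = sup (fun _ => False);
  orth_join : forall a, sup (fun x => x = a \/ x = orth a) = inf (fun _ => False);
  orthomodular : forall a b, le a b ->
    b = sup (fun x => x = a \/ x = inf (fun y => y = b \/ y = orth a))
}.

Arguments le {L} a b : rename.
Arguments sup {L} S : rename.
Arguments inf {L} S : rename.
Arguments orth {L} a : rename.

Definition zero {L : COML} : L := sup (fun _ => False).
Definition one {L : COML} : L := inf (fun _ => False).
Definition meet {L : COML} (a b : L) : L := inf (fun x => x = a \/ x = b).
Definition join {L : COML} (a b : L) : L := sup (fun x => x = a \/ x = b).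

Definition dual_ideal {L : COML} (J : L -> Prop) : Prop :=
  (exists a, J a) /\ ~ J zero /\
  (forall a b, J a -> J b -> J (meet a b)) /\
  (forall a b, J a -> le a b -> J b).

Definition DL (L : COML) : Type := { J : L -> Prop | dual_ideal J }.

Definition Da {L : COML} (a : L) (J : DL L) : Prop := proj1_sig J a.

Definition upper_semicontinuous {L : COML} (f : DL L -> R) : Prop :=
  forall (J0 : DL L) (eps : R), 0 < eps ->
    exists a, proj1_sig J0 a /\
      forall J : DL L, Da a J -> f J < f J0 + eps.

Definition preserves_intersections {L : COML} (f : DL L -> R) : Prop :=
  forall (I : Type) (Js : I -> DL L) (K : DL L),
    inhabited I ->
    (forall a, proj1_sig K a <-> (forall i, proj1_sig (Js i) a)) ->
    is_lub (fun r => exists i, r = f (Js i)) (f K).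

Definition abstract_observable_function {L : COML} (f : DL L -> R) : Prop :=
  upper_semicontinuous f /\ preserves_intersections f.

Definition spectral_family {L : COML} (E : R -> L) : Prop :=
  (forall l m, l <= m -> le (E l) (E m)) /\
  (forall l, E l = inf (fun x => exists m, l < m /\ x = E m)) /\
  inf (fun x => exists l, x = E l) = zero /\
  sup (fun x => exists l, x = E l) = one.

Definition is_glb (S : R -> Prop) (x : R) : Prop :=
  (forall y, S y -> x <= y) /\ (forall z, (forall y, S y -> z <= y) -> z <= x).

(* Main.v *)
Require Import Defs.
From Stdlib Require Import Reals Lra Classical FunctionalExtensionality.
Open Scope R_scope.

Lemma zero_le (L:COML) (a:L) : le zero a.
Proof. unfold zero; apply sup_least; intros; contradiction. Qed.

Lemma le_one (L:COML) (a:L) : le a one.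
Proof. unfold one; apply inf_greatest; intros; contradiction. Qed.

Definition H_pred {L : COML} (a:L) : L -> Prop := fun b => le a b.

Lemma H_dual (L : COML) (a:L) : a <> zero -> dual_ideal (H_pred a).
Proof.
  intro H. unfold H_pred. split. exists a; apply le_refl.
  split. intro h; apply H; apply le_antisym; auto; apply zero_le.
  split. intros b c hb hc; unfold meet; apply inf_greatest; intros x [-> | ->]; auto.
  intros b c hb hbc; eapply le_trans; eauto.
Qed.

Definition Hf {L : COML} (a:L) (h: a<>zero) : DL L := exist _ (H_pred a) (H_dual L a h).

Lemma f_anti (L : COML) (f : DL L -> R) (hf: preserves_intersections f) (J1 J2: DL L) :
  (forall a, proj1_sig J1 a -> proj1_sig J2 a) -> f J2 <= f J1.
Proof.
  intros Hs.
  destruct (hf bool (fun b => if b then J1 else J2) J1 (inhabits true)) as [ub _].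
  - intro a; split. intros h [|]; auto. intros h; exact (h true).
  - apply ub. exists false; reflexivity.
Qed.

Definition charE (L : COML) (f : DL L -> R) (E : R -> L) :=
  forall l (a : L) (h : a <> zero), le a (E l) <-> f (Hf a h) <= l.

Lemma charE_unique L f E1 E2 : charE L f E1 -> charE L f E2 -> E1 = E2.
Proof.
  intros H1 H2. extensionality l. apply le_antisym.
  - destruct (classic (E1 l = zero)) as [e|n]. rewrite e; apply zero_le.
    apply (proj2 (H2 l _ n)). apply (proj1 (H1 l _ n)). apply le_refl.
  - destruct (classic (E2 l = zero)) as [e|n]. rewrite e; apply zero_le.
    apply (proj2 (H1 l _ n)). apply (proj1 (H2 l _ n)). apply le_refl.
Qed.

Lemma le_E L f E x m : charE L f E -> (forall h : x <> zero, f (Hf x h) <= m) -> le x (E m).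
Proof.
  intros HE Hx. destruct (classic (x = zero)) as [e|n]. rewrite e; apply zero_le.
  apply (proj2 (HE m x n)). apply Hx.
Qed.

Lemma exist_charE L f : preserves_intersections f ->
  charE L f (fun l => sup (fun a => exists h : a <> zero, f (Hf a h) <= l)).
Proof.
  intros pi l a h. split.
  - intro ha. set (s := sup (fun a => exists h : a <> zero, f (Hf a h) <= l)) in *.
    assert (hs : s <> zero).
    { intro e. apply h. apply le_antisym. rewrite <- e; auto. apply zero_le. }
    assert (f (Hf s hs) <= l).
    { assert (inh : inhabited {a : L & {h : a <> zero | f (Hf a h) <= l}}).
      { apply NNPP; intro ni. apply hs. apply le_antisym; [|apply zero_le].
        apply sup_least. intros b [hb hbl]. exfalso; apply ni.
        constructor. exists b. exists hb. exact hbl. }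
      destruct (pi {a : L & {h : a <> zero | f (Hf a h) <= l}}
                  (fun i => Hf (projT1 i) (proj1_sig (projT2 i))) (Hf s hs) inh) as [_ lub].
      - intro b; simpl; unfold H_pred; split.
        + intros hb [c [hc hcl]]; simpl. eapply le_trans; [|exact hb].
          apply sup_ub. exists hc; exact hcl.
        + intros hb. apply sup_least. intros c [hc hcl].
          exact (hb (existT _ c (exist _ hc hcl))).
      - apply lub. intros r [[c [hc hcl]] ->]; simpl; exact hcl. }
    eapply Rle_trans; [|exact H]. apply f_anti; auto.
    intros b; simpl; unfold H_pred; intro hb; eapply le_trans; eauto.
  - intro hl. apply sup_ub. exists h; exact hl.
Qed.

Lemma charE_glb L f E : upper_semicontinuous f -> preserves_intersections f -> charE L f E ->
  forall J : DL L, is_glb (fun l => proj1_sig J (E l)) (f J).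
Proof.
  intros usc pi HE J. split.
  - intros y hy. assert (hz : E y <> zero).
    { intro e; rewrite e in hy. destruct (proj2_sig J) as [_ [nz _]]. auto. }
    apply Rle_trans with (f (Hf (E y) hz)).
    + apply f_anti; auto. intros b; simpl; unfold H_pred; intro hb.
      destruct (proj2_sig J) as [_ [_ [_ up]]]. eapply up; eauto.
    + apply (proj1 (HE y _ hz)). apply le_refl.
  - intros z hz. apply Rnot_lt_le; intro hlt.
    destruct (usc J ((z - f J)/2)) as [a [ha hJ]]. lra.
    assert (hna : a <> zero).
    { intro e; rewrite e in ha. destruct (proj2_sig J) as [_ [nz _]]. auto. }
    assert (h1 := hJ (Hf a hna) (le_refl L a)).
    assert (h2 : le a (E (f J + (z - f J)/2))).
    { apply (proj2 (HE _ a hna)). lra. }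
    assert (h3 : proj1_sig J (E (f J + (z - f J)/2))).
    { destruct (proj2_sig J) as [_ [_ [_ up]]]. eapply up; eauto. }
    specialize (hz _ h3). lra.
Qed.

Lemma charE_spectral L f E : charE L f E -> spectral_family E.
Proof.
  intros HE.
  assert (mono : forall l m, l <= m -> le (E l) (E m)).
  { intros l m hlm. apply le_E with f; auto. intros h.
    apply Rle_trans with l; auto. apply (proj1 (HE l _ h)). apply le_refl. }
  split; [exact mono|]. split; [|split].
  - intros l. apply le_antisym.
    + apply inf_greatest. intros x [m [hm ->]]. apply mono; lra.
    + apply le_E with f; auto. intros h. apply Rnot_lt_le; intro hlt.
      set (x := inf (fun x => exists m, l < m /\ x = E m)) in *.
      assert (hx : le x (E ((l + f (Hf x h))/2))).
      { apply inf_lb. exists ((l + f (Hf x h))/2). split; [lra|reflexivity]. }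
      apply (proj1 (HE _ x h)) in hx. lra.
  - apply le_antisym; [|apply zero_le].
    set (x := inf (fun x => exists l, x = E l)).
    destruct (classic (x = zero)) as [e|n]. rewrite e; apply le_refl.
    exfalso. assert (hx : le x (E (f (Hf x n) - 1))).
    { apply inf_lb. eexists; reflexivity. }
    apply (proj1 (HE _ x n)) in hx. lra.
  - apply le_antisym; [apply le_one|].
    destruct (classic (@one L = zero)) as [e|n]. rewrite e; apply zero_le.
    apply le_trans with (E (f (Hf one n))).
    + apply (proj2 (HE _ one n)). lra.
    + apply sup_ub. eexists; reflexivity.
Qed.

Lemma spectral_charE L f E : spectral_family E ->
  (forall J : DL L, is_glb (fun l => proj1_sig J (E l)) (f J)) -> charE L f E.
Proof.
  intros sp gl l a h. destruct sp as [mono [rc _]]. split.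
  - intro ha. apply (proj1 (gl (Hf a h))). exact ha.
  - intro hl. rewrite (rc l). apply inf_greatest. intros x [m [hm ->]].
    destruct (classic (exists mu, mu < m /\ le a (E mu))) as [[mu [hmu ha]]|ne].
    + eapply le_trans; [exact ha|]. apply mono; lra.
    + exfalso. assert (m <= f (Hf a h)).
      { apply (proj2 (gl (Hf a h))). intros y hy. apply Rnot_lt_le; intro hy'.
        apply ne. exists y. split; auto. }
      lra.
Qed.

Theorem theorem2p25 (L : COML) (f : DL L -> R) :
  abstract_observable_function f ->
  exists! E : R -> L,
    spectral_family E /\
    forall J : DL L, is_glb (fun l => proj1_sig J (E l)) (f J).
Proof.
  intros [usc pi].
  pose proof (exist_charE L f pi) as HE.
  eexists. split. split.
  - eapply charE_spectral; exact HE.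
  - apply charE_glb; auto.
  - intros E' [sp gl]. apply (charE_unique L f); auto.
    apply spectral_charE; auto.
Qed.
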